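(* Consider the $\mathrm{GQSAT}$ instance with the following data: - three qudits of dimensions $3,2,3$; - hyperedges $\{1,2\}$ of rank $1$ and $\{2,3\}$ of rank $5$. For this instance $\mathrm{GQSAT}=1$. Consequently, for the following tensor network template $(G,c)$, one has $\mathrm{QMC}(G,c)=15$ and $\mathrm{QMF}(G,c)=14$: - two inputs $s_1,s_2$, two outputs $t_1,t_2$, two vertices $x,y$; - edges with capacities: - $s_1$–$x$, capacity $5$; - $x$–$t_1$, capacity $3$; - $x$–$y$, capacity $2$; - $s_2$–$y$, capacity $3$; - $y$–$t_2$, capacity $5$.
   Context: A tensor network template $(G,c)$ consists of a finite undirected graph $G$ with edge set $E$ whose vertex set is partitioned as $S\sqcup T\sqcup V$. Every element of $S$ (inputs) and every element of $T$ (outputs) is an open end of degree $1$; the elements of $V$ are called vertices. For $u\in S\sqcup T$, $e(u)$ denotes the edge incident to $u$. A capacity function $c:E\to\mathbb{Z}_{>0}$ is given, and to each edge $e$ one associates $\mathbb{C}^{c_e}$ with a fixed basis. At each vertex $v$ of degree $d_v$ an ordering $e(v,1),\dots,e(v,d_v)$ of the incident edge-ends is fixed. A tensor assignment $\mathcal T=(\mathcal T_v)_{v\in V}$ chooses $\mathcal T_v\in\bigotimes_{i=1}^{d_v}\mathbb{C}^{c_{e(v,i)}}$ for each $v$. Let $V_S=\bigotimes_{u\in S}\mathbb{C}^{c_{e(u)}}$ and $V_T=\bigotimes_{u\in T}\mathbb{C}^{c_{e(u)}}$. Contracting the network along all edges gives $\beta(G,c;\mathcal T)\in\mathrm{Hom}(V_S,V_T)$,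 whose matrix entries are $\langle I_T|\beta|I_S\rangle=\sum_W\prod_{v\in V}(\mathcal T_v)_{W|_v}$. Here $W$ ranges over all assignments of basis indices to all edges that agree with $I_S$ on the input edges and with $I_T$ on the output edges, and $W|_v$ is the tuple of indices on $e(v,1),\dots,e(v,d_v)$. The quantum max-flow is $\mathrm{QMF}(G,c)=\max_{\mathcal T}\operatorname{rank}\beta(G,c;\mathcal T)$. An edge cut set is a set $C\subseteq E$ for which there is a partition $S\sqcup T\sqcup V=\bar S\sqcup\bar T$ with $S\subseteq\bar S$, $T\subseteq\bar T$, and $C$ equal to the set of edges having one endpoint in $\bar S$ and the other in $\bar T$. The quantum min-cut is $\mathrm{QMC}(G,c)=\min_C\prod_{e\in C}c_e$, the minimum taken over all edge cut sets $C$. $\mathrm{GQSAT}$: an instance consists of $n$ qudits with dimensions $d_1,\dots,d_n$, a set of hyperedges $e\subseteq\{1,\dots,n\}$, and a rank $r_e$ for each hyperedge. For orthogonal projectors $\Pi_e$ of rank $r_e$ on $\bigotimes_{v\in e}\mathbb{C}^{d_v}$, set $H=\sum_e\Pi_e\otimes I_{\{1,\dots,n\}\setminus e}$ acting on $\bigotimes_{v=1}^n\mathbb{C}^{d_v}$. Then $\mathrm{GQSAT}$ of the instance is the minimum of $\dim\ker H$ over all such choices of projectors. This minimum equals the value of $\dim\ker H$ for a generic choice of projectors. *)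

(* Defs.v *)
From HB Require Import structures.
From mathcomp Require Import all_boot all_order all_algebra.
Set Implicit Arguments. Unset Strict Implicit. Unset Printing Implicit Defensive.
Import Order.TTheory GRing.Theory Num.Theory.
Local Open Scope ring_scope.

Record gqsat_instance := GQInst {
  gq_n : nat;
  gq_dim : 'I_gq_n -> nat;
  gq_edges : seq ({set 'I_gq_n} * nat)   (* (hyperedge e, rank r_e) *)
}.

Section GQSAT.
Variable C : numClosedFieldType.
Variable I : gqsat_instance.

(* basis indices of the full space  (x)_v C^{d_v} *)
Definition gq_full := {dffun forall v : 'I_(gq_n I), 'I_(gq_dim v)}.
(* basis indices of (x)_{v in e} C^{d_v} *)
Definition gq_loc (e : {set 'I_(gq_n I)}) :=
  {dffun forall w : {v : 'I_(gq_n I) | v \in e}, 'I_(gq_dim (val w))}.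

Definition gq_restr (e : {set 'I_(gq_n I)}) (i : gq_full) : gq_loc e :=
  [ffun w => i (val w)].

Definition gq_edge (j : 'I_(size (gq_edges I))) := nth (set0, 0%N) (gq_edges I) j.

Definition gq_choice :=
  forall j : 'I_(size (gq_edges I)), 'M[C]_(#|{: gq_loc (gq_edge j).1}|).

Definition orth_projector (m : nat) (P : 'M[C]_m) : bool :=
  (P *m P == P) && (map_mx Num.conj (P^T) == P).

Definition gq_valid (P : gq_choice) : Prop :=
  forall j, orth_projector (P j) /\ \rank (P j) = (gq_edge j).2.

(* Pi_e (x) I_{complement of e}, as a matrix on the full space *)
Definition gq_embed (e : {set 'I_(gq_n I)}) (Pe : 'M[C]_(#|{: gq_loc e}|))
  : 'M[C]_(#|{: gq_full}|) :=
  \matrix_(a, b)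
    (Pe (enum_rank (gq_restr e (enum_val a))) (enum_rank (gq_restr e (enum_val b)))
     * ([forall v, (v \notin e) ==> (enum_val a v == enum_val b v)])%:R).

Definition gq_H (P : gq_choice) : 'M[C]_(#|{: gq_full}|) :=
  \sum_j gq_embed (P j).

Definition dim_ker (m : nat) (M : 'M[C]_m) : nat := (m - \rank M)%N.

Definition GQSAT_is (k : nat) : Prop :=
  (exists P : gq_choice, gq_valid P /\ dim_ker (gq_H P) = k) /\
  (forall P : gq_choice, gq_valid P -> (k <= dim_ker (gq_H P))%N).

End GQSAT.

(* Nodes are  (S + T) + V : inputs, outputs, vertices. *)
Record tn_template := TNT {
  tS : finType; tT : finType; tV : finType; tE : finType;
  tends : tE -> ((tS + tT) + tV) * ((tS + tT) + tV);
  tcap : tE -> nat;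
  tin : tS -> tE;
  tout : tT -> tE;
  tdeg : tV -> nat;
  tord : forall v : tV, 'I_(tdeg v) -> tE
}.
Arguments tord {t} v k.

Section Template.
Variable G : tn_template.
Notation node := ((tS G + tT G) + tV G)%type.

Definition endcount (e : tE G) (x : node) : nat :=
  ((tends e).1 == x) + ((tends e).2 == x).
Definition node_deg (x : node) : nat := \sum_(e : tE G) endcount e x.

Definition template_wf : Prop :=
  [/\ forall e : tE G, (0 < tcap e)%N,
      forall u : tS G, node_deg (inl (inl u)) = 1%N /\ endcount (tin u) (inl (inl u)) = 1%N,
      forall u : tT G, node_deg (inl (inr u)) = 1%N /\ endcount (tout u) (inl (inr u)) = 1%N
    & forall (v : tV G) (e : tE G), #|[pred k | tord v k == e]| = endcount e (inr v)].

Definition IS := {dffun forall u : tS G, 'I_(tcap (tin u))}.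
Definition IT := {dffun forall u : tT G, 'I_(tcap (tout u))}.
Definition IW := {dffun forall e : tE G, 'I_(tcap e)}.
Definition Iloc (v : tV G) := {dffun forall k : 'I_(tdeg v), 'I_(tcap (tord v k))}.

Definition tensor_assignment (C : Type) := forall v : tV G, Iloc v -> C.

Definition restr_at (W : IW) (v : tV G) : Iloc v := [ffun k => W (tord v k)].

Definition beta_entry (C : numClosedFieldType) (Tn : tensor_assignment C)
  (iT : IT) (iS : IS) : C :=
  \sum_(W : IW | [forall u, W (tin u) == iS u] && [forall u, W (tout u) == iT u])
     \prod_(v : tV G) Tn v (restr_at W v).

Definition beta (C : numClosedFieldType) (Tn : tensor_assignment C)
  : 'M[C]_(#|{: IT}|, #|{: IS}|) :=
  \matrix_(i, j) beta_entry Tn (enum_val i) (enum_val j).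

Definition QMF_is (C : numClosedFieldType) (n : nat) : Prop :=
  (exists Tn : tensor_assignment C, \rank (beta Tn) = n) /\
  (forall Tn : tensor_assignment C, (\rank (beta Tn) <= n)%N).

(* cuts: partitions  node = Sbar + Tbar  with S in Sbar, T in Tbar *)
Definition cut_partition (side : {ffun node -> bool}) : bool :=
  [forall s, side (inl (inl s))] && [forall t, ~~ side (inl (inr t))].
Definition cut_edges (side : {ffun node -> bool}) : {set tE G} :=
  [set e | side (tends e).1 != side (tends e).2].
Definition cut_value (side : {ffun node -> bool}) : nat :=
  (\prod_(e in cut_edges side) tcap e)%N.

Definition QMC_is (n : nat) : Prop :=
  (exists side, cut_partition side /\ cut_value side = n) /\
  (forall side, cut_partition side -> (n <= cut_value side)%N).

End Template.

(* qudits 1,2,3 are 0,1,2; dims 3,2,3; hyperedges {1,2} rank 1, {2,3} rank 5 *)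
Definition q0 : 'I_3 := @Ordinal 3 0 isT.
Definition q1 : 'I_3 := @Ordinal 3 1 isT.
Definition q2 : 'I_3 := @Ordinal 3 2 isT.
Definition inst16 : gqsat_instance :=
  @GQInst 3 (fun v => nth 0%N [:: 3; 2; 3]%N v)
    [:: ([set q0; q1], 1%N); ([set q1; q2], 5%N)].

(* inputs s1,s2 = 0,1 ; outputs t1,t2 = 0,1 ; vertices x,y = 0,1 ;
   edges 0: s1-x (5), 1: x-t1 (3), 2: x-y (2), 3: s2-y (3), 4: y-t2 (5) *)
Definition i0 : 'I_2 := @Ordinal 2 0 isT.
Definition i1 : 'I_2 := @Ordinal 2 1 isT.
Definition node16 := (('I_2 + 'I_2) + 'I_2)%type.
Definition s1 : node16 := inl (inl i0).
Definition s2 : node16 := inl (inl i1).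
Definition t1 : node16 := inl (inr i0).
Definition t2 : node16 := inl (inr i1).
Definition vx : node16 := inr i0.
Definition vy : node16 := inr i1.
Definition e0 : 'I_5 := @Ordinal 5 0 isT.
Definition e1 : 'I_5 := @Ordinal 5 1 isT.
Definition e2 : 'I_5 := @Ordinal 5 2 isT.
Definition e3 : 'I_5 := @Ordinal 5 3 isT.
Definition e4 : 'I_5 := @Ordinal 5 4 isT.

Definition ends16 (e : 'I_5) : node16 * node16 :=
  nth (vx, vx) [:: (s1, vx); (vx, t1); (vx, vy); (s2, vy); (vy, t2)] e.

Definition G16 : tn_template :=
  @TNT 'I_2 'I_2 'I_2 'I_5
    ends16
    (fun e => nth 1%N [:: 5; 3; 2; 3; 5]%N e)
    (fun u => nth e0 [:: e0; e3] u)
    (fun u => nth e0 [:: e1; e4] u)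
    (fun _ => 3%N)
    (fun v k => nth e0 (nth [::] [:: [:: e0; e1; e2]; [:: e2; e3; e4]] v) k).

(* Main.v *)
Require Import Defs.
From HB Require Import structures.
From mathcomp Require Import all_boot all_order all_algebra.
From mathcomp Require Import ring zify.
Set Implicit Arguments. Unset Strict Implicit. Unset Printing Implicit Defensive.

Lemma wf16 : template_wf G16.
Proof.
split.
- by case=> [[|[|[|[|[|]]]]] ].
- by case=> [[|[|]]] // ?; split; rewrite /node_deg /= ?(big_ord_recl, big_ord0).
- by case=> [[|[|]]] // ?; split; rewrite /node_deg /= ?(big_ord_recl, big_ord0).
- case=> [[|[|]]] // ? [[|[|[|[|[|]]]]] ] // ?; rewrite /endcount /=.
  all: by rewrite -sum1_card big_mkcond /= !big_ord_recl big_ord0.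
Qed.

Lemma qmc16 : QMC_is G16 15.
Proof.
split.
- exists [ffun n : node16 => match n with inl (inl _) => true | inl (inr _) => false | inr _ => true end].
  split; first by apply/andP; split; apply/forallP => x; rewrite ffunE.
  by rewrite /cut_value big_mkcond /= !big_ord_recl big_ord0 !inE /= !ffunE.
- move=> side /andP[/forallP hs /forallP ht].
  rewrite /cut_value big_mkcond /= !big_ord_recl big_ord0 !inE /=.
  have -> : side s1 = true by apply: hs.
  have -> : side s2 = true by apply: hs.
  have -> : side t1 = false by apply/negbTE/ht.
  have -> : side t2 = false by apply/negbTE/ht.
  by case: (side vx); case: (side vy).
Qed.

Module Aux.
Import GRing.Theory.
Local Open Scope ring_scope.

Lemma exists_lker (F : fieldType) m n (M : 'M[F]_(m,n)) : (n < m)%N ->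
  exists v : 'rV_m, (exists j, v 0 j != 0) /\ v *m M = 0.
Proof.
move=> nm.
have : kermx M != 0.
  rewrite -mxrank_eq0 mxrank_ker -lt0n subn_gt0.
  exact: leq_ltn_trans (rank_leq_col M) nm.
case: (pickP (fun i => row i (kermx M) != 0)) => [i ri|h].
  move=> _; exists (row i (kermx M)); split; last by rewrite -row_mul mulmx_ker row0.
  apply/existsP; move: ri; apply: contraR; rewrite negb_exists => /forallP h.
  by apply/eqP/rowP => j; move/negPn/eqP: (h j) => ->; rewrite mxE.
move=> /negP []; apply/eqP/row_matrixP => i; rewrite row0.
by move/negbFE/eqP: (h i).
Qed.

Lemma sum_enum (R : Type) (idx : R) (op : Monoid.com_law idx) (T : finType) (F : T -> R) :
  \big[op/idx]_(i < #|T|) F (enum_val i) = \big[op/idx]_(x : T) F x.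
Proof. by rewrite [RHS](reindex (fun i : 'I_#|T| => enum_val i)) //; apply: onW_bij; exact: enum_val_bij. Qed.

Lemma rank_row_nz (F : fieldType) n (v : 'rV[F]_n) j : v 0 j != 0 -> \rank v = 1%N.
Proof.
move=> h; apply/eqP; rewrite eqn_leq rank_leq_row lt0n mxrank_eq0.
by apply: contraNneq h => ->; rewrite mxE.
Qed.

Section MxF.
Variable F : fieldType.

Definition mxf (A B : finType) (f : A -> B -> F) : 'M[F]_(#|A|, #|B|) :=
  \matrix_(i, j) f (enum_val i) (enum_val j).
Definition rvf (A : finType) (g : A -> F) : 'rV[F]_#|A| := \row_i g (enum_val i).

Lemma mxf_mul (A B D : finType) (f : A -> B -> F) (g : B -> D -> F) :
  mxf f *m mxf g = mxf (fun a d => \sum_b f a b * g b d).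
Proof.
apply/matrixP => i j; rewrite !mxE.
under eq_bigr do rewrite !mxE.
exact: (sum_enum _ (fun b => f (enum_val i) b * g b (enum_val j))).
Qed.

Lemma rvf_mul (A B : finType) (g : A -> F) (f : A -> B -> F) :
  rvf g *m mxf f = rvf (fun b => \sum_a g a * f a b).
Proof.
apply/matrixP => i j; rewrite !mxE.
under eq_bigr do rewrite !mxE.
exact: (sum_enum _ (fun a => g a * f a (enum_val j))).
Qed.

Lemma mxf_tr (A B : finType) (f : A -> B -> F) : (mxf f)^T = mxf (fun b a => f a b).
Proof. by apply/matrixP => i j; rewrite !mxE. Qed.

Lemma mxf0 (A B : finType) (f : A -> B -> F) : (forall a b, f a b = 0) -> mxf f = 0.
Proof. by move=> h; apply/matrixP => i j; rewrite !mxE h. Qed.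

Lemma rvf0 (A : finType) (g : A -> F) : (forall a, g a = 0) -> rvf g = 0.
Proof. by move=> h; apply/matrixP => i j; rewrite !mxE h. Qed.

Lemma rvf_eq0 (A : finType) (g : A -> F) : rvf g = 0 -> forall a, g a = 0.
Proof.
move=> h a; have := congr1 (fun M : 'rV_#|A| => M 0 (enum_rank a)) h.
by rewrite !mxE enum_rankK.
Qed.

Lemma mxf_eq0 (A B : finType) (f : A -> B -> F) : mxf f = 0 -> forall a b, f a b = 0.
Proof.
move=> h a b; have := congr1 (fun M : 'M_(#|A|,#|B|) => M (enum_rank a) (enum_rank b)) h.
by rewrite !mxE !enum_rankK.
Qed.

Lemma rvf_nz (A : finType) (g : A -> F) a : g a != 0 -> \rank (rvf g) = 1%N.
Proof. by move=> h; apply: (@rank_row_nz _ _ _ (enum_rank a)); rewrite mxE enum_rankK. Qed.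

Lemma sum_delta (T : finType) (G : T -> F) c : \sum_b G b * (b == c)%:R = G c.
Proof.
rewrite (bigD1 c) //= eqxx mulr1 big1 ?addr0 // => b /negbTE ->; by rewrite mulr0.
Qed.

Lemma sum_delta' (T : finType) (G : T -> F) c : \sum_b (c == b)%:R * G b = G c.
Proof.
rewrite (bigD1 c) //= eqxx mul1r big1 ?addr0 // => b; rewrite eq_sym => /negbTE ->; by rewrite mul0r.
Qed.

Lemma exists_lkerf (A B : finType) (f : A -> B -> F) : (#|B| < #|A|)%N ->
  exists g : A -> F, (exists a, g a != 0) /\ forall b, \sum_a g a * f a b = 0.
Proof.
move=> h; have [v [[j vj] vM]] := exists_lker (mxf f) h.
exists (fun a => v 0 (enum_rank a)); split.
  by exists (enum_val j); rewrite enum_valK.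
have E : v = rvf (fun a => v 0 (enum_rank a)).
  by apply/rowP => i; rewrite mxE enum_valK.
by move: vM; rewrite {1}E rvf_mul => /rvf_eq0 H b; exact: H.
Qed.

End MxF.

Lemma capP (e : 'I_5) : (0 < @tcap G16 e)%N.
Proof. by case: e => [[|[|[|[|[|]]]]] ]. Qed.

Definition odef (e : 'I_5) : 'I_(@tcap G16 e) := Ordinal (capP e).
Definition mkW (f : 'I_5 -> nat) : IW G16 := [ffun e : 'I_5 => insubd (odef e) (f e)].

Lemma mkW_val f e : (f e < @tcap G16 e)%N -> val (mkW f e) = f e.
Proof. by move=> h; rewrite ffunE val_insubd h. Qed.

Lemma restr_mkW (v : tV G16) (f g : 'I_5 -> nat) : (forall j, f (tord v j) = g (tord v j)) ->
  restr_at (mkW f) v = restr_at (mkW g) v.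
Proof. by move=> h; apply/ffunP => j; rewrite !ffunE h. Qed.

Section Beta.
Variable C : numClosedFieldType.
Variable Tn : tensor_assignment G16 C.

Definition TX (s : 'I_5) (a : 'I_3) (k : 'I_2) : C :=
  Tn (restr_at (mkW (fun e => nth 0%N [:: val s; val a; val k; 0; 0]%N e)) i0).
Definition TY (k : 'I_2) (b : 'I_3) (c : 'I_5) : C :=
  Tn (restr_at (mkW (fun e => nth 0%N [:: 0; 0; val k; val b; val c]%N e)) i1).

Lemma beta_entryE (t : IT G16) (s : IS G16) :
  beta_entry Tn t s = \sum_(k < 2) TX (s i0) (t i0) k * TY k (s i1) (t i1).
Proof.
pose f (k : 'I_2) := fun e : 'I_5 => nth 0%N [:: val (s i0); val (t i0); val k; val (s i1); val (t i1)] e.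
pose h (k : 'I_2) := mkW (f k).
pose h' (W : IW G16) := (W e2 : 'I_2).
rewrite /beta_entry (reindex_onto h h'); last first.
  move=> W /andP[/forallP hS /forallP hT]; apply/ffunP => e; apply/val_inj.
  rewrite /h ffunE val_insubd.
  case: e => [[|[|[|[|[|]]]]] ] // pe; rewrite (bool_irrelevance pe isT).
  - move/eqP: (hS i0) => E; rewrite /f /=; case: ifP => [_|/negP[]]; [by rewrite -E | exact: ltn_ord].
  - move/eqP: (hT i0) => E; rewrite /f /=; case: ifP => [_|/negP[]]; [by rewrite -E | exact: ltn_ord].
  - rewrite /f /=; case: ifP => [_|/negP[]]; [by [] | exact: ltn_ord].
  - move/eqP: (hS i1) => E; rewrite /f /=; case: ifP => [_|/negP[]]; [by rewrite -E | exact: ltn_ord].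
  - move/eqP: (hT i1) => E; rewrite /f /=; case: ifP => [_|/negP[]]; [by rewrite -E | exact: ltn_ord].
have hval k e : val (h k e) = f k e.
  rewrite mkW_val //; case: e => [[|[|[|[|[|]]]]] ] // pe; rewrite /f /=; exact: ltn_ord.
apply: eq_big => k.
  apply/andP; split; last by apply/eqP/val_inj; exact: (hval k e2).
  by apply/andP; split; apply/forallP => -[[|[|]]] // pu; apply/eqP/val_inj;
    rewrite (bool_irrelevance pu isT); exact: hval.
move=> _; rewrite big_ord_recl big_ord1.
have -> : ord0 = i0 :> 'I_2 by apply: val_inj.
have -> : lift i0 ord0 = i1 :> 'I_2 by apply: val_inj.
rewrite /TX /TY; congr (_ * _); f_equal; apply: restr_mkW; by case=> [[|[|[|]]]].
Qed.


Notation Mid := ('I_3 * 'I_2 * 'I_3)%type.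

Lemma sum_pair (I J : finType) (G : I * J -> C) : \sum_p G p = \sum_i \sum_j G (i,j).
Proof. by rewrite pair_bigA; apply: eq_bigr => -[]. Qed.

Lemma sum_mid (G : Mid -> C) : \sum_m G m = \sum_a \sum_k \sum_b G (a,k,b).
Proof. by rewrite sum_pair sum_pair. Qed.

Definition N1 := mxf (fun (t : IT G16) (m : Mid) => (t i0 == m.1.1 :> 'I_3)%:R * TY m.1.2 m.2 (t i1)).
Definition N2 := mxf (fun (m : Mid) (s : IS G16) => TX (s i0) m.1.1 m.1.2 * (m.2 == s i1 :> 'I_3)%:R).

Lemma betaE : beta Tn = N1 *m N2.
Proof.
rewrite mxf_mul; apply/matrixP => i j; rewrite !mxE beta_entryE sum_mid.
set t := enum_val i; set s := enum_val j.
transitivity (\sum_a (t i0 == a :> 'I_3)%:R * \sum_k \sum_b (TY k b (t i1) * TX (s i0) a k) * (b == s i1 :> 'I_3)%:R); last first.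
  apply: eq_bigr => a _; rewrite big_distrr; apply: eq_bigr => k _; rewrite big_distrr.
  apply: eq_bigr => b _ /=; ring.
rewrite sum_delta'; apply: eq_bigr => k _; by rewrite sum_delta mulrC.
Qed.


Lemma sum_only (T : finType) (G : T -> C) c : (forall b, b != c -> G b = 0) -> \sum_b G b = G c.
Proof. by move=> h; rewrite (bigD1 c) //= big1 ?addr0 // => b; apply: h. Qed.

Lemma rank_beta_le : (\rank (beta Tn) <= 14)%N.
Proof.
have [phi [[ak0 phi0] hphi]] := @exists_lkerf C _ _ (fun (ak : 'I_3 * 'I_2) (s : 'I_5) => TX s ak.1 ak.2)
  ltac:(by rewrite card_prod !card_ord).
have [al [[a0 al0] hal]] := @exists_lkerf C _ _ (fun (a : 'I_3) (k : 'I_2) => phi (a,k))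
  ltac:(by rewrite !card_ord).
have [psi [[kb0 psi0] hpsi]] := @exists_lkerf C _ _ (fun (kb : 'I_2 * 'I_3) (c : 'I_5) => TY kb.1 kb.2 c)
  ltac:(by rewrite card_prod !card_ord).
pose Phi := mxf (fun (m : Mid) (c : 'I_3) => phi (m.1.1, m.1.2) * (m.2 == c)%:R).
pose v := rvf (fun m : Mid => al m.1.1 * psi (m.1.2, m.2)).
have rPhi : (3 <= \rank Phi)%N.
  pose E := mxf (fun (c : 'I_3) (m : Mid) => (ak0.1 == m.1.1)%:R * ((ak0.2 == m.1.2)%:R * ((c == m.2)%:R * (phi ak0)^-1))).
  have EPhi : E *m Phi = 1%:M.
    rewrite mxf_mul; apply/matrixP => i j; rewrite !mxE sum_mid.
    under eq_bigr => a _ do under eq_bigr => k _ do under eq_bigr => b _ do rewrite /= !mulrA.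
    rewrite (sum_only (c:=ak0.1)) => [|a]; last first.
      rewrite eq_sym => /negbTE na; rewrite big1 // => k _; rewrite big1 // => b _; by rewrite na !mul0r.
    rewrite (sum_only (c:=ak0.2)) => [|k]; last first.
      rewrite eq_sym => /negbTE nk; rewrite big1 // => b _; by rewrite nk mulr0 !mul0r.
    rewrite (sum_only (c:=(enum_val i))) => [|b]; last first.
      by rewrite eq_sym => /negbTE nb; rewrite nb mulr0 !mul0r.
    by rewrite !eqxx -surjective_pairing /= !mul1r mulVf // mul1r (inj_eq enum_val_inj).
  have := mxrankM_maxr E Phi; rewrite EPhi mxrank1 => h; apply: leq_trans h; by rewrite card_ord.
have N2Phi : N2^T *m Phi = 0.
  rewrite mxf_tr mxf_mul; apply: mxf0 => s c; rewrite sum_mid.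
  transitivity (\sum_a \sum_k (phi (a,k) * TX (s i0) a k) * (s i1 == c :> 'I_3)%:R).
    apply: eq_bigr => a _; apply: eq_bigr => k _.
    rewrite (sum_only (c := (s i1 : 'I_3))) => [|b nb]; last by rewrite /= (negbTE nb) mulr0 mul0r.
    by rewrite /= eqxx mulr1; ring.
  under eq_bigr do rewrite -big_distrl.
  rewrite -big_distrl /= -(sum_pair (fun ak => phi ak * TX (s i0) ak.1 ak.2)) /= hphi; exact: mul0r.
have vPhi : v *m Phi = 0.
  rewrite rvf_mul; apply: rvf0 => c; rewrite sum_mid.
  transitivity (\sum_a \sum_k al a * phi (a,k) * psi (k, c)).
    apply: eq_bigr => a _; apply: eq_bigr => k _.
    rewrite (sum_only (c := c)) => [|b /negbTE nb]; last by rewrite /= nb !mulr0.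
    by rewrite /= eqxx mulr1; ring.
  rewrite exchange_big /=; apply: big1 => k _; by rewrite -big_distrl /= hal mul0r.
have vN1 : v *m N1^T = 0.
  rewrite mxf_tr rvf_mul; apply: rvf0 => t; rewrite sum_mid.
  transitivity (\sum_a \sum_k \sum_b (t i0 == a :> 'I_3)%:R * (al a * (psi (k, b) * TY k b (t i1)))).
    apply: eq_bigr => a _; apply: eq_bigr => k _; apply: eq_bigr => b _ /=; ring.
  rewrite (sum_only (c := (t i0 : 'I_3))) => [|a na]; last first.
    by apply: big1 => k _; apply: big1 => b _; rewrite eq_sym (negbTE na) mul0r.
  rewrite /= eqxx.
  transitivity (al (t i0) * \sum_k \sum_b psi (k,b) * TY k b (t i1)).
    rewrite big_distrr; apply: eq_bigr => k _; rewrite big_distrr; apply: eq_bigr => b _ /=; ring.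
  by rewrite -(sum_pair (fun kb => psi kb * TY kb.1 kb.2 (t i1))) /= hpsi mulr0.
have v1 : \rank v = 1%N.
  apply: (@rvf_nz _ _ _ (a0, kb0.1, kb0.2)) => /=; rewrite -surjective_pairing; exact: mulf_neq0.
rewrite -mxrank_tr betaE trmx_mul.
have sub : (N2^T *m N1^T <= kermx Phi *m N1^T)%MS by apply: submxMr; rewrite sub_kermx N2Phi.
apply: leq_trans (mxrankS sub) _.
have := mxrank_mul_ker (kermx Phi) N1^T.
have : (1 <= \rank (kermx Phi :&: kermx N1^T))%N.
  have : (\rank v <= \rank (kermx Phi :&: kermx N1^T))%N.
    apply: mxrankS; rewrite sub_capmx !sub_kermx; apply/andP; split; apply/eqP; [exact: vPhi | exact: vN1].
  by rewrite v1.
rewrite mxrank_ker.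
match goal with |- context[(?x - \rank Phi)%N] =>
  have cM : x = 18%N by rewrite !card_prod !card_ord end.
move: rPhi cM; lia.
Qed.
End Beta.

Definition mkT (a b : nat) : IT G16 :=
  [ffun u : 'I_2 => insubd (Ordinal (capP (@tout G16 u))) (if val u == 0%N then a else b)].
Definition mkS (a b : nat) : IS G16 :=
  [ffun u : 'I_2 => insubd (Ordinal (capP (@tin G16 u))) (if val u == 0%N then a else b)].

Lemma mkT0 a b : (a < 3)%N -> val (mkT a b i0) = a.
Proof. by move=> h; rewrite ffunE val_insubd /= h. Qed.
Lemma mkT1 a b : (b < 5)%N -> val (mkT a b i1) = b.
Proof. by move=> h; rewrite ffunE val_insubd /= h. Qed.
Lemma mkS0 a b : (a < 5)%N -> val (mkS a b i0) = a.
Proof. by move=> h; rewrite ffunE val_insubd /= h. Qed.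
Lemma mkS1 a b : (b < 3)%N -> val (mkS a b i1) = b.
Proof. by move=> h; rewrite ffunE val_insubd /= h. Qed.

Lemma mkT_bij : bijective (fun p : 'I_3 * 'I_5 => mkT p.1 p.2).
Proof.
exists (fun t : IT G16 => ((t i0 : 'I_3), (t i1 : 'I_5))).
  by move=> [a b] /=; congr pair; apply: val_inj; rewrite /= ?mkT0 ?mkT1.
move=> t; apply/ffunP => -[[|[|]]] // pu; apply: val_inj; rewrite ffunE val_insubd /=;
  rewrite (bool_irrelevance pu isT) ltn_ord //.
Qed.
Lemma mkS_bij : bijective (fun p : 'I_5 * 'I_3 => mkS p.1 p.2).
Proof.
exists (fun t : IS G16 => ((t i0 : 'I_5), (t i1 : 'I_3))).
  by move=> [a b] /=; congr pair; apply: val_inj; rewrite /= ?mkS0 ?mkS1.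
move=> t; apply/ffunP => -[[|[|]]] // pu; apply: val_inj; rewrite ffunE val_insubd /=;
  rewrite (bool_irrelevance pu isT) ltn_ord //.
Qed.

Section Lower.
Variable C : numClosedFieldType.

Definition fx (s a k : nat) : C :=
  match s, a, k with
  | 0%N, 0%N, 1%N => 1 | 0%N, 1%N, 0%N => 1 | 1%N, 2%N, 1%N => 1 | 2%N, 1%N, 1%N => 1 | 3%N, 0%N, 0%N => -1 | 4%N, 2%N, 0%N => 1
  | _, _, _ => 0 end.
Definition fy (k b c : nat) : C :=
  match k, b, c with
  | 0%N, 0%N, 0%N => 1 | 0%N, 0%N, 4%N => 1 | 0%N, 1%N, 4%N => -1 | 0%N, 2%N, 2%N => -1
  | 1%N, 0%N, 3%N => -1 | 1%N, 1%N, 1%N => -1 | 1%N, 1%N, 2%N => 1 | 1%N, 2%N, 4%N => -1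
  | _, _, _ => 0 end.

Definition Tn0 : tensor_assignment G16 C := fun v (l : Iloc v) =>
  if val v == 0%N then fx (l (@Ordinal 3 0 isT)) (l (@Ordinal 3 1 isT)) (l (@Ordinal 3 2 isT))
  else fy (l (@Ordinal 3 0 isT)) (l (@Ordinal 3 1 isT)) (l (@Ordinal 3 2 isT)).

Lemma TX0 s a k : TX Tn0 s a k = fx s a k.
Proof. by rewrite /TX /Tn0 /= !ffunE !val_insubd /= !ltn_ord. Qed.
Lemma TY0 k b c : TY Tn0 k b c = fy k b c.
Proof. by rewrite /TY /Tn0 /= !ffunE !val_insubd /= !ltn_ord. Qed.


Lemma beta0 a b c d : (a < 3)%N -> (b < 5)%N -> (c < 5)%N -> (d < 3)%N ->
  beta_entry Tn0 (mkT a b) (mkS c d) = fx c a 0 * fy 0 d b + fx c a 1 * fy 1 d b.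
Proof.
move=> ha hb hc hd; rewrite beta_entryE big_ord_recl big_ord1 !TX0 !TY0.
by rewrite mkS0 // mkS1 // mkT0 // mkT1.
Qed.

Lemma sumIT (F : IT G16 -> C) : \sum_t F t = \sum_(0 <= a < 3) \sum_(0 <= b < 5) F (mkT a b).
Proof.
rewrite (reindex (fun p : 'I_3 * 'I_5 => mkT p.1 p.2)) /=; last exact: onW_bij _ mkT_bij.
rewrite sum_pair big_mkord; apply: eq_bigr => a _; by rewrite big_mkord.
Qed.

Definition wc (t : IT G16) : bool :=
  ((val (t i0) == 0%N) && (val (t i1) == 3%N)) || ((val (t i0) == 1%N) && (val (t i1) == 0%N)).

Lemma ker_beta0 (g : IT G16 -> C) : (forall s, \sum_t g t * beta_entry Tn0 t s = 0) ->
  forall t, g t = if wc t then g (mkT 0 3) else 0.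
Proof.
move=> H.
have E00 := H (mkS 0 0); rewrite sumIT unlock /= !beta0 //= !(mul0r, mulr0, mul1r, mulr1, addr0, add0r, mulrN1, opprK) in E00.
have E01 := H (mkS 0 1); rewrite sumIT unlock /= !beta0 //= !(mul0r, mulr0, mul1r, mulr1, addr0, add0r, mulrN1, opprK) in E01.
have E02 := H (mkS 0 2); rewrite sumIT unlock /= !beta0 //= !(mul0r, mulr0, mul1r, mulr1, addr0, add0r, mulrN1, opprK) in E02.
have E10 := H (mkS 1 0); rewrite sumIT unlock /= !beta0 //= !(mul0r, mulr0, mul1r, mulr1, addr0, add0r, mulrN1, opprK) in E10.
have E11 := H (mkS 1 1); rewrite sumIT unlock /= !beta0 //= !(mul0r, mulr0, mul1r, mulr1, addr0, add0r, mulrN1, opprK) in E11.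
have E12 := H (mkS 1 2); rewrite sumIT unlock /= !beta0 //= !(mul0r, mulr0, mul1r, mulr1, addr0, add0r, mulrN1, opprK) in E12.
have E20 := H (mkS 2 0); rewrite sumIT unlock /= !beta0 //= !(mul0r, mulr0, mul1r, mulr1, addr0, add0r, mulrN1, opprK) in E20.
have E21 := H (mkS 2 1); rewrite sumIT unlock /= !beta0 //= !(mul0r, mulr0, mul1r, mulr1, addr0, add0r, mulrN1, opprK) in E21.
have E22 := H (mkS 2 2); rewrite sumIT unlock /= !beta0 //= !(mul0r, mulr0, mul1r, mulr1, addr0, add0r, mulrN1, opprK) in E22.
have E30 := H (mkS 3 0); rewrite sumIT unlock /= !beta0 //= !(mul0r, mulr0, mul1r, mulr1, addr0, add0r, mulrN1, opprK) in E30.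
have E31 := H (mkS 3 1); rewrite sumIT unlock /= !beta0 //= !(mul0r, mulr0, mul1r, mulr1, addr0, add0r, mulrN1, opprK) in E31.
have E32 := H (mkS 3 2); rewrite sumIT unlock /= !beta0 //= !(mul0r, mulr0, mul1r, mulr1, addr0, add0r, mulrN1, opprK) in E32.
have E40 := H (mkS 4 0); rewrite sumIT unlock /= !beta0 //= !(mul0r, mulr0, mul1r, mulr1, addr0, add0r, mulrN1, opprK) in E40.
have E41 := H (mkS 4 1); rewrite sumIT unlock /= !beta0 //= !(mul0r, mulr0, mul1r, mulr1, addr0, add0r, mulrN1, opprK) in E41.
have E42 := H (mkS 4 2); rewrite sumIT unlock /= !beta0 //= !(mul0r, mulr0, mul1r, mulr1, addr0, add0r, mulrN1, opprK) in E42.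
have z x : - x = 0 -> x = 0 :> C by move/eqP; rewrite oppr_eq0 => /eqP.
have h23 := z _ E10. have h24 := z _ E12. have h13 := z _ E20. have h14 := z _ E22.
have h22 := z _ E42.
move: E31 E32 => h04 h02.
rewrite h22 !(oppr0, sub0r, subr0, addr0, add0r) in E11; have h21 := z _ E11.
rewrite h04 !(oppr0, sub0r, subr0, addr0, add0r) in E02; have h12 := z _ E02.
rewrite h12 !(oppr0, sub0r, subr0, addr0, add0r) in E21; have h11 := z _ E21.
rewrite h04 !(oppr0, sub0r, subr0, addr0, add0r) in E30; have h00 := z _ E30.
rewrite h24 !(oppr0, sub0r, subr0, addr0, add0r) in E40; have h20 := E40.
rewrite h02 h14 !(oppr0, sub0r, subr0, addr0, add0r) in E01; have h01 := z _ E01.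
rewrite h14 !(oppr0, sub0r, subr0, addr0, add0r) in E00.
move/eqP: E00; rewrite addrC subr_eq0 => /eqP h10.
case: mkT_bij => h' K1 K2 t; rewrite -(K2 t).
case: (h' t) => a b /=.
case: a => [[|[|[|]]]] // pa; case: b => [[|[|[|[|[|]]]]]] // pb;
  rewrite /wc mkT0 // mkT1 //=.
Qed.


Lemma rank_beta0 : \rank (beta Tn0) = 14%N.
Proof.
apply/eqP; rewrite eqn_leq rank_beta_le /=.
pose w := rvf (fun t : IT G16 => if wc t then 1 else 0 : C).
have sub : (kermx (beta Tn0) <= w)%MS.
  apply/row_subP => i; set r := row i _.
  have rb : r *m beta Tn0 = 0 by rewrite -row_mul mulmx_ker row0.
  pose g t := r 0 (enum_rank t).
  have Er : r = rvf g by apply/rowP => j; rewrite [RHS]mxE /g enum_valK.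
  have H : forall s, \sum_t g t * beta_entry Tn0 t s = 0.
    by move: rb; rewrite {1}Er rvf_mul => /rvf_eq0 H s; exact: H.
  have -> : r = g (mkT 0 3) *: w.
    apply/rowP => j; rewrite Er !mxE (ker_beta0 H).
    by case: (wc _); rewrite ?mulr1 ?mulr0.
  exact: scalemx_sub (submx_refl w).
have := mxrankS sub; have := rank_leq_row w; rewrite mxrank_ker.
match goal with |- context[(?x - \rank (beta Tn0))%N] =>
  have cM : x = 15%N by rewrite -(bij_eq_card mkT_bij) card_prod !card_ord end.
move: cM => cM; move: (\rank w) (\rank (beta Tn0)) => x y; rewrite cM; lia.
Qed.
End Lower.

Notation I16 := inst16.
Notation FI := (gq_full inst16).
Notation E1 := [set q0; q1].
Notation E2 := [set q1; q2].

Lemma dimP (v : 'I_3) : (0 < gq_dim (g:=I16) v)%N.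
Proof. by case: v => [[|[|[|]]]]. Qed.

Definition mkF (a b c : nat) : FI :=
  [ffun v : 'I_3 => insubd (Ordinal (dimP v)) (nth 0%N [:: a; b; c] v)].

Lemma mkF0 a b c : (a < 3)%N -> val (mkF a b c q0) = a.
Proof. by move=> h; rewrite ffunE val_insubd /= h. Qed.
Lemma mkF1 a b c : (b < 2)%N -> val (mkF a b c q1) = b.
Proof. by move=> h; rewrite ffunE val_insubd /= h. Qed.
Lemma mkF2 a b c : (c < 3)%N -> val (mkF a b c q2) = c.
Proof. by move=> h; rewrite ffunE val_insubd /= h. Qed.

Lemma mkF_bij : bijective (fun p : 'I_3 * 'I_2 * 'I_3 => mkF p.1.1 p.1.2 p.2).
Proof.
exists (fun x : FI => ((x q0 : 'I_3), (x q1 : 'I_2), (x q2 : 'I_3))).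
  by move=> [[a b] c] /=; congr (_, _, _); apply: val_inj; rewrite /= ?mkF0 ?mkF1 ?mkF2.
move=> x; apply/ffunP => -[[|[|[|]]]] // pu; apply: val_inj; rewrite ffunE val_insubd /=;
  rewrite (bool_irrelevance pu isT) ltn_ord //.
Qed.

Lemma mkF_surj (x : FI) : x = mkF (x q0) (x q1) (x q2).
Proof. by case: mkF_bij => h K1 K2; move: (K2 x); case: (h x) => [[a b] c] /= <-; rewrite ?mkF0 ?mkF1 ?mkF2. Qed.

Definition L1 := gq_loc (I:=I16) E1.
Definition L2 := gq_loc (I:=I16) E2.

Lemma m10 : q0 \in E1. Proof. by rewrite !inE eqxx. Qed.
Lemma m11 : q1 \in E1. Proof. by rewrite !inE eqxx orbT. Qed.
Lemma m21 : q1 \in E2. Proof. by rewrite !inE eqxx. Qed.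
Lemma m22 : q2 \in E2. Proof. by rewrite !inE eqxx orbT. Qed.
Lemma n12 : q2 \notin E1. Proof. by rewrite !inE. Qed.
Lemma n20 : q0 \notin E2. Proof. by rewrite !inE. Qed.

Definition w10 : {v : 'I_3 | v \in E1} := exist _ q0 m10.
Definition w11 : {v : 'I_3 | v \in E1} := exist _ q1 m11.
Definition w21 : {v : 'I_3 | v \in E2} := exist _ q1 m21.
Definition w22 : {v : 'I_3 | v \in E2} := exist _ q2 m22.

Definition r1 (x : FI) : L1 := gq_restr (I:=I16) E1 x.
Definition r2 (x : FI) : L2 := gq_restr (I:=I16) E2 x.

Lemma restr_eq (e : {set 'I_3}) (x y : FI) :
  (forall v, v \in e -> val (x v) = val (y v)) -> gq_restr (I:=I16) e x = gq_restr (I:=I16) e y.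
Proof. by move=> h; apply/ffunP => w; rewrite !ffunE; apply: val_inj; apply: h (valP w). Qed.

Definition mkL1 (a b : nat) : L1 := r1 (mkF a b 0).
Definition mkL2 (b c : nat) : L2 := r2 (mkF 0 b c).

Lemma r1F a b c : (a < 3)%N -> (b < 2)%N -> r1 (mkF a b c) = mkL1 a b.
Proof.
move=> ha hb; apply: restr_eq => v; case: v => [[|[|[|]]]] // pv; rewrite (bool_irrelevance pv isT).
- by rewrite !mkF0.
- by rewrite !mkF1.
- by rewrite !inE.
Qed.

Lemma r2F a b c : (b < 2)%N -> (c < 3)%N -> r2 (mkF a b c) = mkL2 b c.
Proof.
move=> hb hc; apply: restr_eq => v; case: v => [[|[|[|]]]] // pv; rewrite (bool_irrelevance pv isT).
- by rewrite !inE.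
- by rewrite !mkF1.
- by rewrite !mkF2.
Qed.

Lemma mkL1_bij : bijective (fun p : 'I_3 * 'I_2 => mkL1 p.1 p.2).
Proof.
exists (fun z : L1 => ((z w10 : 'I_3), (z w11 : 'I_2))).
  by move=> [a b] /=; congr (_, _); apply: val_inj; rewrite /= ffunE /= ?mkF0 ?mkF1.
move=> z; apply/ffunP => -[[[|[|[|]]] pu] pv] //.
- have -> : exist _ (Ordinal pu) pv = w10 by do 2 apply: val_inj.
  by apply: val_inj; rewrite ffunE /= mkF0.
- have -> : exist _ (Ordinal pu) pv = w11 by do 2 apply: val_inj.
  by apply: val_inj; rewrite ffunE /= mkF1.
- by exfalso; move: pv; rewrite (bool_irrelevance pu isT) !inE.
Qed.

Lemma mkL2_bij : bijective (fun p : 'I_2 * 'I_3 => mkL2 p.1 p.2).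
Proof.
exists (fun z : L2 => ((z w21 : 'I_2), (z w22 : 'I_3))).
  by move=> [a b] /=; congr (_, _); apply: val_inj; rewrite /= ffunE /= ?mkF1 ?mkF2.
move=> z; apply/ffunP => -[[[|[|[|]]] pu] pv] //.
- by exfalso; move: pv; rewrite (bool_irrelevance pu isT) !inE.
- have -> : exist _ (Ordinal pu) pv = w21 by do 2 apply: val_inj.
  by apply: val_inj; rewrite ffunE /= mkF1.
- have -> : exist _ (Ordinal pu) pv = w22 by do 2 apply: val_inj.
  by apply: val_inj; rewrite ffunE /= mkF2.
Qed.

Lemma agree1 (x y : FI) :
  [forall v, (v \notin E1) ==> (x v == y v)] = (val (x q2) == val (y q2)).
Proof.
apply/forallP/idP => [h | h v].
  by move/implyP: (h q2) => /(_ n12).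
apply/implyP; case: v => [[|[|[|]]]] // pu; rewrite (bool_irrelevance pu isT) ?inE //= => _.
Qed.

Lemma agree2 (x y : FI) :
  [forall v, (v \notin E2) ==> (x v == y v)] = (val (x q0) == val (y q0)).
Proof.
apply/forallP/idP => [h | h v].
  by move/implyP: (h q0) => /(_ n20).
apply/implyP; case: v => [[|[|[|]]]] // pu; rewrite (bool_irrelevance pu isT) ?inE //= => _.
Qed.

Section Sums.
Variable C : numClosedFieldType.

Lemma sumF (G : FI -> C) :
  \sum_x G x = \sum_(a < 3) \sum_(b < 2) \sum_(c < 3) G (mkF a b c).
Proof.
rewrite (reindex (fun p : 'I_3 * 'I_2 * 'I_3 => mkF p.1.1 p.1.2 p.2)) /=; last exact: onW_bij _ mkF_bij.
by rewrite sum_mid.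
Qed.

Lemma sumF_nat (G : FI -> C) :
  \sum_x G x = \sum_(0 <= a < 3) \sum_(0 <= b < 2) \sum_(0 <= c < 3) G (mkF a b c).
Proof.
rewrite sumF big_mkord; apply: eq_bigr => a _; rewrite big_mkord; apply: eq_bigr => b _.
by rewrite big_mkord.
Qed.

Lemma sumL1 (G : L1 -> C) : \sum_z G z = \sum_(a < 3) \sum_(b < 2) G (mkL1 a b).
Proof.
rewrite (reindex (fun p : 'I_3 * 'I_2 => mkL1 p.1 p.2)) /=; last exact: onW_bij _ mkL1_bij.
by rewrite sum_pair.
Qed.

Lemma sumL2 (G : L2 -> C) : \sum_z G z = \sum_(b < 2) \sum_(c < 3) G (mkL2 b c).
Proof.
rewrite (reindex (fun p : 'I_2 * 'I_3 => mkL2 p.1 p.2)) /=; last exact: onW_bij _ mkL2_bij.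
by rewrite sum_pair.
Qed.
End Sums.

Lemma cardL1 : #|{: L1}| = 6%N.
Proof. by rewrite -(bij_eq_card mkL1_bij) card_prod !card_ord. Qed.
Lemma cardL2 : #|{: L2}| = 6%N.
Proof. by rewrite -(bij_eq_card mkL2_bij) card_prod !card_ord. Qed.
Lemma cardF : #|{: FI}| = 18%N.
Proof. by rewrite -(bij_eq_card mkF_bij) !card_prod !card_ord. Qed.

Lemma exists_lker_rank (F : fieldType) m n (M : 'M[F]_(m,n)) : (\rank M < m)%N ->
  exists v : 'rV_m, (exists j, v 0 j != 0) /\ v *m M = 0.
Proof.
move=> nm.
have : kermx M != 0 by rewrite -mxrank_eq0 mxrank_ker -lt0n subn_gt0.
case: (pickP (fun i => row i (kermx M) != 0)) => [i ri|h].
  move=> _; exists (row i (kermx M)); split; last by rewrite -row_mul mulmx_ker row0.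
  apply/existsP; move: ri; apply: contraR; rewrite negb_exists => /forallP h.
  by apply/eqP/rowP => j; move/negPn/eqP: (h j) => ->; rewrite mxE.
move=> /negP []; apply/eqP/row_matrixP => i; rewrite row0.
by move/negbFE/eqP: (h i).
Qed.

Lemma mkFq0 (a : 'I_3) b c : mkF a b c q0 = a :> 'I_3.
Proof. by apply: val_inj; rewrite /= mkF0. Qed.
Lemma mkFq1 a (b : 'I_2) c : mkF a b c q1 = b :> 'I_2.
Proof. by apply: val_inj; rewrite /= mkF1. Qed.
Lemma mkFq2 a b (c : 'I_3) : mkF a b c q2 = c :> 'I_3.
Proof. by apply: val_inj; rewrite /= mkF2. Qed.

Section Lowerbound.
Variable C : numClosedFieldType.

Definition emb1 (P1 : 'M[C]_#|{: L1}|) := mxf (fun x y : FI =>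
  P1 (enum_rank (r1 x)) (enum_rank (r1 y)) * (val (x q2) == val (y q2))%:R).
Definition emb2 (P2 : 'M[C]_#|{: L2}|) := mxf (fun x y : FI =>
  P2 (enum_rank (r2 x)) (enum_rank (r2 y)) * (val (x q0) == val (y q0))%:R).

Lemma sum_only' (T : finType) (G : T -> C) c : (forall b, b != c -> G b = 0) -> \sum_b G b = G c.
Proof. by move=> h; rewrite (bigD1 c) //= big1 ?addr0 // => b; apply: h. Qed.

Lemma sum_rank (T : finType) (G : 'I_#|T| -> C) : \sum_(x : T) G (enum_rank x) = \sum_i G i.
Proof.
transitivity (\sum_(i < #|T|) G (enum_rank (enum_val i))).
  exact: (esym (sum_enum _ (fun x : T => G (enum_rank x)))).
by apply: eq_bigr => i _; rewrite enum_valK.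
Qed.

Lemma sum_delta_nat n (G : 'I_n -> C) (k : 'I_n) : \sum_(c < n) G c * ((c : nat) == k)%:R = G k.
Proof.
rewrite (bigD1 k) //= eqxx mulr1 big1 ?addr0 // => b nb.
have -> : ((b : nat) == k) = false := negbTE nb.
by rewrite mulr0.
Qed.

Lemma sum_delta_nat' n (G : 'I_n -> C) (k : 'I_n) : \sum_(c < n) ((c : nat) == k)%:R * G c = G k.
Proof. rewrite -(sum_delta_nat G k); apply: eq_bigr => c _; by rewrite mulrC. Qed.

Lemma ker_exists (P1 : 'M[C]_#|{: L1}|) (P2 : 'M[C]_#|{: L2}|) :
  \rank P1 = 1%N -> \rank P2 = 5%N -> (\rank (emb1 P1 + emb2 P2)%R <= 17)%N.
Proof.
move=> rP1 rP2.
have [psi0 [[p0 hp0] hpsi]] := exists_lker_rank (M := P2) ltac:(by rewrite rP2 cardL2).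
set cb := col_base P1; set rb := row_base P1.
have P1E i j : P1 i j = \sum_k cb i k * rb k j by rewrite /cb /rb -{1}(mulmx_base P1) mxE.
have [al [[a0 al0] hal]] := @exists_lkerf C _ _
   (fun (a : 'I_3) (bk : 'I_2 * 'I_(\rank P1)) => cb (enum_rank (mkL1 a bk.1)) bk.2)
   ltac:(by rewrite card_prod !card_ord rP1).
pose v := rvf (fun x : FI => al (x q0 : 'I_3) * psi0 0 (enum_rank (r2 x))).
have vE1 : v *m emb1 P1 = 0.
  rewrite rvf_mul; apply: rvf0 => y; rewrite sumF.
  set Y := enum_rank (r1 y); set y2 : 'I_3 := y q2.
  transitivity (\sum_(a < 3) \sum_(b < 2) \sum_(c < 3)
     (al a * psi0 0 (enum_rank (mkL2 b c)) * P1 (enum_rank (mkL1 a b)) Y) * ((c : nat) == y2)%:R).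
    apply: eq_bigr => a _; apply: eq_bigr => b _; apply: eq_bigr => c _.
    by rewrite mkFq0 r2F // r1F // mkF2 // !mulrA.
  under eq_bigr => a _ do under eq_bigr => b _ do rewrite sum_delta_nat P1E big_distrr.
  transitivity (\sum_(b < 2) \sum_k (\sum_(a < 3) al a * cb (enum_rank (mkL1 a b)) k) *
      (psi0 0 (enum_rank (mkL2 b y2)) * rb k Y)).
    rewrite exchange_big; apply: eq_bigr => b _; rewrite exchange_big; apply: eq_bigr => k _.
    rewrite big_distrl; apply: eq_bigr => a _ /=; ring.
  apply: big1 => b _; apply: big1 => k _.
  by rewrite (hal (b, k)) mul0r.
have vE2 : v *m emb2 P2 = 0.
  rewrite rvf_mul; apply: rvf0 => y; rewrite sumF.
  set Y := enum_rank (r2 y); set y0 : 'I_3 := y q0.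
  transitivity (\sum_(a < 3) ((a : nat) == y0)%:R * (al a * \sum_(b < 2) \sum_(c < 3)
     psi0 0 (enum_rank (mkL2 b c)) * P2 (enum_rank (mkL2 b c)) Y)).
    apply: eq_bigr => a _; rewrite !big_distrr; apply: eq_bigr => b _; rewrite !big_distrr.
    apply: eq_bigr => c _.
    rewrite mkFq0 r2F // -[(val a == val y0)]/((a : nat) == y0) /=; ring.
  rewrite sum_delta_nat'.
  rewrite -(sumL2 (fun z => psi0 0 (enum_rank z) * P2 (enum_rank z) Y)).
  rewrite (sum_rank (fun i => psi0 0 i * P2 i Y)).
  have := congr1 (fun M : 'rV_#|{: L2}| => M 0 Y) hpsi; rewrite !mxE /= => ->.
  by rewrite mulr0.
have v1 : \rank v = 1%N.
  case: mkL2_bij => h' K1 K2.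
  have := K2 (enum_val p0); case: (h' (enum_val p0)) => b0 c0 /= Ez.
  apply: (@rvf_nz _ _ _ (mkF a0 b0 c0)).
  by rewrite mkFq0 r2F // Ez enum_valK mulf_neq0.
have vH : v *m (emb1 P1 + emb2 P2) = 0 by rewrite mulmxDr vE1 vE2 addr0.
have : (\rank v <= \rank (kermx (emb1 P1 + emb2 P2)%R))%N by apply: mxrankS; rewrite sub_kermx vH.
rewrite v1 mxrank_ker.
match goal with |- context[(?x - \rank (emb1 P1 + emb2 P2)%R)%N] =>
  have cM : x = 18%N by exact: cardF end.
move: cM; move: (\rank (emb1 P1 + emb2 P2)%R) => r cM; rewrite cM; lia.
Qed.

Lemma embE1 (P1 : 'M[C]_#|{: L1}|) : gq_embed (C:=C) (I:=I16) (e:=E1) P1 = emb1 P1.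
Proof. by apply/matrixP => i j; rewrite !mxE agree1. Qed.
Lemma embE2 (P2 : 'M[C]_#|{: L2}|) : gq_embed (C:=C) (I:=I16) (e:=E2) P2 = emb2 P2.
Proof. by apply/matrixP => i j; rewrite !mxE agree2. Qed.

Definition j0 : 'I_2 := @Ordinal 2 0 isT.
Definition j1 : 'I_2 := @Ordinal 2 1 isT.

Lemma HE (P : gq_choice C I16) : gq_H P = (emb1 (P j0) + emb2 (P j1))%R.
Proof.
rewrite /gq_H big_ord_recl big_ord1.
have -> : ord0 = j0 :> 'I_2 by apply: val_inj.
have -> : lift j0 ord0 = j1 :> 'I_2 by apply: val_inj.
have -> : gq_embed (P j0) = emb1 (P j0) := embE1 _.
have -> : gq_embed (P j1) = emb2 (P j1) := embE2 _.
by [].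
Qed.

Lemma gq_lower (P : gq_choice C I16) : gq_valid P -> (1 <= dim_ker (gq_H P))%N.
Proof.
move=> hv; have [_ r1P] := hv j0; have [_ r2P] := hv j1.
have := ker_exists r1P r2P; rewrite /dim_ker HE.
match goal with |- context[(?x - \rank (emb1 (P j0) + emb2 (P j1))%R)%N] =>
  have cM : x = 18%N by exact: cardF end.
move: cM; move: (\rank (emb1 (P j0) + emb2 (P j1))%R) => r cM; rewrite cM; lia.
Qed.
End Lowerbound.

Import Num.Theory.

Definition d1 (p : L1) : bool := val (p w10) == val (p w11).
Definition d2 (z : L2) : bool := val (z w21) == val (z w22).

Lemma d1L a b : (a < 3)%N -> (b < 2)%N -> d1 (mkL1 a b) = (a == b).
Proof. by move=> ha hb; rewrite /d1 !ffunE !val_insubd /= ha hb. Qed.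
Lemma d2L b c : (b < 2)%N -> (c < 3)%N -> d2 (mkL2 b c) = (b == c).
Proof. by move=> hb hc; rewrite /d2 !ffunE !val_insubd /= hb hc. Qed.

Lemma mkL2_eq b c b' c' : (b < 2)%N -> (c < 3)%N -> (b' < 2)%N -> (c' < 3)%N ->
  (mkL2 b c == mkL2 b' c') = (b == b') && (c == c').
Proof.
move=> hb hc hb' hc'; apply/eqP/andP => [E|[/eqP -> /eqP ->] //].
have E1' := congr1 (fun z : L2 => val (z w21)) E; have E2' := congr1 (fun z : L2 => val (z w22)) E.
move: E1' E2'; rewrite !ffunE !val_insubd /= hb hc hb' hc' => -> ->; by rewrite !eqxx.
Qed.

Section Exist.
Variable C : numClosedFieldType.
Local Notation h := ((2%:R : C)^-1).

Definition Q1 : 'M[C]_#|{: L1}| := mxf (fun p q : L1 => if d1 p && d1 q then h else 0).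
Definition Q2 : 'M[C]_#|{: L2}| := mxf (fun p q : L2 => if d2 p && d2 q then h else 0).
Definition P2c : 'M[C]_#|{: L2}| := 1%:M - Q2.

Lemma mxf_eq (A B : finType) (f g : A -> B -> C) : (forall a b, f a b = g a b) -> mxf f = mxf g.
Proof. by move=> e; apply/matrixP => i j; rewrite !mxE e. Qed.

Lemma hh : h * h + h * h = h.
Proof. by field. Qed.

Lemma Q1_idem : Q1 *m Q1 = Q1.
Proof.
rewrite mxf_mul; apply: mxf_eq => p q; rewrite sumL1.
under eq_bigr => a _ do under eq_bigr => b _ do rewrite d1L //.
case: (d1 p); case: (d1 q); rewrite /= ?big_ord_recl ?big_ord0 /= ?(mul0r, mulr0, addr0, add0r) //.
by field.
Qed.

Lemma Q2_idem : Q2 *m Q2 = Q2.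
Proof.
rewrite mxf_mul; apply: mxf_eq => p q; rewrite sumL2.
under eq_bigr => a _ do under eq_bigr => b _ do rewrite d2L //.
case: (d2 p); case: (d2 q); rewrite /= ?big_ord_recl ?big_ord0 /= ?(mul0r, mulr0, addr0, add0r) //.
by field.
Qed.

Lemma conjh : Num.conj h = h.
Proof. by rewrite fmorphV rmorph_nat. Qed.

Lemma Q1_herm : map_mx Num.conj Q1^T = Q1.
Proof.
apply/matrixP => i j; rewrite !mxE andbC.
by case: (_ && _); rewrite ?conjh ?conjC0.
Qed.

Lemma Q2_herm : map_mx Num.conj Q2^T = Q2.
Proof.
apply/matrixP => i j; rewrite !mxE andbC.
by case: (_ && _); rewrite ?conjh ?conjC0.
Qed.

Lemma P2_idem : P2c *m P2c = P2c.
Proof. by rewrite /P2c mulmxBl !mulmxBr !mul1mx mulmx1 Q2_idem subrr subr0. Qed.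

Lemma P2_herm : map_mx Num.conj P2c^T = P2c.
Proof. by rewrite /P2c linearB /= map_mxB trmx1 map_mx1 Q2_herm. Qed.



Lemma hneq0 : h != 0.
Proof. by rewrite invr_eq0 pnatr_eq0. Qed.

Lemma rank_Q (A : finType) (d : A -> bool) (a0 : A) : d a0 ->
  \rank (mxf (fun p q : A => if d p && d q then h else 0)) = 1%N.
Proof.
move=> da0; apply/eqP; rewrite eqn_leq; apply/andP; split.
  have -> : mxf (fun p q : A => if d p && d q then h else 0) =
    mxf (fun p (_ : 'I_1) => if d p then h else 0) *m mxf (fun (_ : 'I_1) q => if d q then 1 else 0 : C).
    rewrite mxf_mul; apply: mxf_eq => p q; rewrite big_ord1.
    by case: (d p); case: (d q); rewrite ?mulr1 ?mulr0 ?mul0r.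
  apply: leq_trans (mxrankM_maxl _ _) _; apply: leq_trans (rank_leq_col _) _.
  by rewrite card_ord.
rewrite lt0n mxrank_eq0; apply/eqP => E.
by have := mxf_eq0 E a0 a0; rewrite da0 /=; apply/eqP; exact: hneq0.
Qed.

Lemma rank_Q1 : \rank Q1 = 1%N.
Proof. by apply: (rank_Q (a0 := mkL1 0 0)); rewrite d1L. Qed.
Lemma rank_Q2 : \rank Q2 = 1%N.
Proof. by apply: (rank_Q (a0 := mkL2 0 0)); rewrite d2L. Qed.

Lemma rank_P2 : \rank P2c = 5%N.
Proof.
have QP : Q2 *m P2c = 0 by rewrite /P2c mulmxBr mulmx1 Q2_idem subrr.
have h1 : (\rank Q2 <= \rank (kermx P2c))%N by apply: mxrankS; rewrite sub_kermx QP.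
have h2 : (\rank (1%:M : 'M[C]_#|{: L2}|) <= \rank Q2 + \rank P2c)%N.
  by rewrite -(_ : Q2 + P2c = 1%:M) ?mxrank_add // /P2c addrC subrK.
move: h1 h2; rewrite mxrank_ker mxrank1 rank_Q2; have := cardL2; move: (\rank P2c) => r; lia.
Qed.


Definition Pc : gq_choice C I16 := fun j =>
  match j as j' return 'M[C]_(#|{: gq_loc (gq_edge j').1}|) with
  | @Ordinal _ m pm =>
    (match m as m' return forall pm' : (m' < size (gq_edges I16))%N,
        'M[C]_(#|{: gq_loc (gq_edge (Ordinal pm')).1}|) with
     | 0 => fun _ => Q1
     | 1 => fun _ => P2c
     | _ => fun _ => const_mx 0
     end) pm
  end.

Lemma Pc_valid : gq_valid Pc.
Proof.
case=> [[|[|]]] // pj; rewrite /orth_projector /=; split.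
- by rewrite Q1_idem Q1_herm !eqxx.
- exact: rank_Q1.
- by rewrite P2_idem P2_herm !eqxx.
- exact: rank_P2.
Qed.


Definition Hf (a b c a' b' c' : nat) : C :=
  (if (a == b) && (a' == b') then h else 0) * (c == c')%:R +
  (((b == b') && (c == c'))%:R - (if (b == c) && (b' == c') then h else 0)) * (a == a')%:R.

Lemma Hent a b c a' b' c' : (a < 3)%N -> (b < 2)%N -> (c < 3)%N ->
  (a' < 3)%N -> (b' < 2)%N -> (c' < 3)%N ->
  (emb1 Q1 + emb2 P2c) (enum_rank (mkF a b c)) (enum_rank (mkF a' b' c')) = Hf a b c a' b' c'.
Proof.
move=> ha hb hc ha' hb' hc'.
rewrite !mxE !enum_rankK (inj_eq enum_rank_inj).
rewrite !r1F // !r2F // !d1L // !d2L // mkL2_eq // !mkF0 // !mkF2 //.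
Qed.

Definition wcF (x : FI) : bool := (val (x q0) == 2%N) && (val (x q1) == val (x q2)).

Lemma kerH (g : FI -> C) :
  (forall y, \sum_x g x * (emb1 Q1 + emb2 P2c) (enum_rank x) (enum_rank y) = 0) ->
  forall x, g x = if wcF x then g (mkF 2 0 0) else 0.
Proof.
move=> H.
have E000 := H (mkF 0 0 0); rewrite sumF_nat unlock /= !Hent //= /Hf /= in E000.
have E001 := H (mkF 0 0 1); rewrite sumF_nat unlock /= !Hent //= /Hf /= in E001.
have E002 := H (mkF 0 0 2); rewrite sumF_nat unlock /= !Hent //= /Hf /= in E002.
have E010 := H (mkF 0 1 0); rewrite sumF_nat unlock /= !Hent //= /Hf /= in E010.
have E011 := H (mkF 0 1 1); rewrite sumF_nat unlock /= !Hent //= /Hf /= in E011.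
have E012 := H (mkF 0 1 2); rewrite sumF_nat unlock /= !Hent //= /Hf /= in E012.
have E100 := H (mkF 1 0 0); rewrite sumF_nat unlock /= !Hent //= /Hf /= in E100.
have E101 := H (mkF 1 0 1); rewrite sumF_nat unlock /= !Hent //= /Hf /= in E101.
have E102 := H (mkF 1 0 2); rewrite sumF_nat unlock /= !Hent //= /Hf /= in E102.
have E110 := H (mkF 1 1 0); rewrite sumF_nat unlock /= !Hent //= /Hf /= in E110.
have E111 := H (mkF 1 1 1); rewrite sumF_nat unlock /= !Hent //= /Hf /= in E111.
have E112 := H (mkF 1 1 2); rewrite sumF_nat unlock /= !Hent //= /Hf /= in E112.
have E200 := H (mkF 2 0 0); rewrite sumF_nat unlock /= !Hent //= /Hf /= in E200.
have E201 := H (mkF 2 0 1); rewrite sumF_nat unlock /= !Hent //= /Hf /= in E201.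
have E202 := H (mkF 2 0 2); rewrite sumF_nat unlock /= !Hent //= /Hf /= in E202.
have E210 := H (mkF 2 1 0); rewrite sumF_nat unlock /= !Hent //= /Hf /= in E210.
have E211 := H (mkF 2 1 1); rewrite sumF_nat unlock /= !Hent //= /Hf /= in E211.
have E212 := H (mkF 2 1 2); rewrite sumF_nat unlock /= !Hent //= /Hf /= in E212.
have F000 : (1%:R) * g (mkF 0 0 0) + (-1%:R / 2%:R) * g (mkF 0 1 1) + (1%:R / 2%:R) * g (mkF 1 1 0) = 0 by apply: etrans _ E000; field.
have F001 : (3%:R / 2%:R) * g (mkF 0 0 1) + (1%:R / 2%:R) * g (mkF 1 1 1) = 0 by apply: etrans _ E001; field.
have F002 : (3%:R / 2%:R) * g (mkF 0 0 2) + (1%:R / 2%:R) * g (mkF 1 1 2) = 0 by apply: etrans _ E002; field.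
have F010 : (1%:R) * g (mkF 0 1 0) = 0 by apply: etrans _ E010; field.
have F011 : (-1%:R / 2%:R) * g (mkF 0 0 0) + (1%:R / 2%:R) * g (mkF 0 1 1) = 0 by apply: etrans _ E011; field.
have F012 : (1%:R) * g (mkF 0 1 2) = 0 by apply: etrans _ E012; field.
have F100 : (1%:R / 2%:R) * g (mkF 1 0 0) + (-1%:R / 2%:R) * g (mkF 1 1 1) = 0 by apply: etrans _ E100; field.
have F101 : (1%:R) * g (mkF 1 0 1) = 0 by apply: etrans _ E101; field.
have F102 : (1%:R) * g (mkF 1 0 2) = 0 by apply: etrans _ E102; field.
have F110 : (1%:R / 2%:R) * g (mkF 0 0 0) + (3%:R / 2%:R) * g (mkF 1 1 0) = 0 by apply: etrans _ E110; field.
have F111 : (1%:R / 2%:R) * g (mkF 0 0 1) + (-1%:R / 2%:R) * g (mkF 1 0 0) + (1%:R) * g (mkF 1 1 1) = 0 by apply: etrans _ E111; field.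
have F112 : (1%:R / 2%:R) * g (mkF 0 0 2) + (3%:R / 2%:R) * g (mkF 1 1 2) = 0 by apply: etrans _ E112; field.
have F200 : (1%:R / 2%:R) * g (mkF 2 0 0) + (-1%:R / 2%:R) * g (mkF 2 1 1) = 0 by apply: etrans _ E200; field.
have F201 : (1%:R) * g (mkF 2 0 1) = 0 by apply: etrans _ E201; field.
have F202 : (1%:R) * g (mkF 2 0 2) = 0 by apply: etrans _ E202; field.
have F210 : (1%:R) * g (mkF 2 1 0) = 0 by apply: etrans _ E210; field.
have F211 : (-1%:R / 2%:R) * g (mkF 2 0 0) + (1%:R / 2%:R) * g (mkF 2 1 1) = 0 by apply: etrans _ E211; field.
have F212 : (1%:R) * g (mkF 2 1 2) = 0 by apply: etrans _ E212; field.
have h000 : g (mkF 0 0 0) = (3%:R) * ((1%:R) * g (mkF 0 0 0) + (-1%:R / 2%:R) * g (mkF 0 1 1) + (1%:R / 2%:R) * g (mkF 1 1 0)) + (3%:R) * ((-1%:R / 2%:R) * g (mkF 0 0 0) + (1%:R / 2%:R) * g (mkF 0 1 1)) + (-1%:R) * ((1%:R / 2%:R) * g (mkF 0 0 0) + (3%:R / 2%:R) * g (mkF 1 1 0)) by field.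
rewrite F000 F011 F110 ?(mulr0, addr0) in h000.
have h001 : g (mkF 0 0 1) = (1%:R) * ((3%:R / 2%:R) * g (mkF 0 0 1) + (1%:R / 2%:R) * g (mkF 1 1 1)) + (-1%:R) * ((1%:R / 2%:R) * g (mkF 1 0 0) + (-1%:R / 2%:R) * g (mkF 1 1 1)) + (-1%:R) * ((1%:R / 2%:R) * g (mkF 0 0 1) + (-1%:R / 2%:R) * g (mkF 1 0 0) + (1%:R) * g (mkF 1 1 1)) by field.
rewrite F001 F100 F111 ?(mulr0, addr0) in h001.
have h002 : g (mkF 0 0 2) = (3%:R / 4%:R) * ((3%:R / 2%:R) * g (mkF 0 0 2) + (1%:R / 2%:R) * g (mkF 1 1 2)) + (-1%:R / 4%:R) * ((1%:R / 2%:R) * g (mkF 0 0 2) + (3%:R / 2%:R) * g (mkF 1 1 2)) by field.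
rewrite F002 F112 ?(mulr0, addr0) in h002.
have h010 : g (mkF 0 1 0) = (1%:R) * ((1%:R) * g (mkF 0 1 0)) by field.
rewrite F010 ?(mulr0, addr0) in h010.
have h011 : g (mkF 0 1 1) = (3%:R) * ((1%:R) * g (mkF 0 0 0) + (-1%:R / 2%:R) * g (mkF 0 1 1) + (1%:R / 2%:R) * g (mkF 1 1 0)) + (5%:R) * ((-1%:R / 2%:R) * g (mkF 0 0 0) + (1%:R / 2%:R) * g (mkF 0 1 1)) + (-1%:R) * ((1%:R / 2%:R) * g (mkF 0 0 0) + (3%:R / 2%:R) * g (mkF 1 1 0)) by field.
rewrite F000 F011 F110 ?(mulr0, addr0) in h011.
have h012 : g (mkF 0 1 2) = (1%:R) * ((1%:R) * g (mkF 0 1 2)) by field.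
rewrite F012 ?(mulr0, addr0) in h012.
have h100 : g (mkF 1 0 0) = (-1%:R) * ((3%:R / 2%:R) * g (mkF 0 0 1) + (1%:R / 2%:R) * g (mkF 1 1 1)) + (5%:R) * ((1%:R / 2%:R) * g (mkF 1 0 0) + (-1%:R / 2%:R) * g (mkF 1 1 1)) + (3%:R) * ((1%:R / 2%:R) * g (mkF 0 0 1) + (-1%:R / 2%:R) * g (mkF 1 0 0) + (1%:R) * g (mkF 1 1 1)) by field.
rewrite F001 F100 F111 ?(mulr0, addr0) in h100.
have h101 : g (mkF 1 0 1) = (1%:R) * ((1%:R) * g (mkF 1 0 1)) by field.
rewrite F101 ?(mulr0, addr0) in h101.
have h102 : g (mkF 1 0 2) = (1%:R) * ((1%:R) * g (mkF 1 0 2)) by field.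
rewrite F102 ?(mulr0, addr0) in h102.
have h110 : g (mkF 1 1 0) = (-1%:R) * ((1%:R) * g (mkF 0 0 0) + (-1%:R / 2%:R) * g (mkF 0 1 1) + (1%:R / 2%:R) * g (mkF 1 1 0)) + (-1%:R) * ((-1%:R / 2%:R) * g (mkF 0 0 0) + (1%:R / 2%:R) * g (mkF 0 1 1)) + (1%:R) * ((1%:R / 2%:R) * g (mkF 0 0 0) + (3%:R / 2%:R) * g (mkF 1 1 0)) by field.
rewrite F000 F011 F110 ?(mulr0, addr0) in h110.
have h111 : g (mkF 1 1 1) = (-1%:R) * ((3%:R / 2%:R) * g (mkF 0 0 1) + (1%:R / 2%:R) * g (mkF 1 1 1)) + (3%:R) * ((1%:R / 2%:R) * g (mkF 1 0 0) + (-1%:R / 2%:R) * g (mkF 1 1 1)) + (3%:R) * ((1%:R / 2%:R) * g (mkF 0 0 1) + (-1%:R / 2%:R) * g (mkF 1 0 0) + (1%:R) * g (mkF 1 1 1)) by field.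
rewrite F001 F100 F111 ?(mulr0, addr0) in h111.
have h112 : g (mkF 1 1 2) = (-1%:R / 4%:R) * ((3%:R / 2%:R) * g (mkF 0 0 2) + (1%:R / 2%:R) * g (mkF 1 1 2)) + (3%:R / 4%:R) * ((1%:R / 2%:R) * g (mkF 0 0 2) + (3%:R / 2%:R) * g (mkF 1 1 2)) by field.
rewrite F002 F112 ?(mulr0, addr0) in h112.
have h201 : g (mkF 2 0 1) = (1%:R) * ((1%:R) * g (mkF 2 0 1)) by field.
rewrite F201 ?(mulr0, addr0) in h201.
have h202 : g (mkF 2 0 2) = (1%:R) * ((1%:R) * g (mkF 2 0 2)) by field.
rewrite F202 ?(mulr0, addr0) in h202.
have h210 : g (mkF 2 1 0) = (1%:R) * ((1%:R) * g (mkF 2 1 0)) by field.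
rewrite F210 ?(mulr0, addr0) in h210.
have h211 : g (mkF 2 1 1) - g (mkF 2 0 0) = (-2%:R) * ((1%:R / 2%:R) * g (mkF 2 0 0) + (-1%:R / 2%:R) * g (mkF 2 1 1)) by field.
rewrite F200 ?(mulr0, addr0) in h211.
have h212 : g (mkF 2 1 2) = (1%:R) * ((1%:R) * g (mkF 2 1 2)) by field.
rewrite F212 ?(mulr0, addr0) in h212.
move/eqP: h211; rewrite subr_eq0 => /eqP h211.
move=> x; rewrite (mkF_surj x).
case: (x q0) => [[|[|[|]]]] // p0; case: (x q1) => [[|[|]]] // p1; case: (x q2) => [[|[|[|]]]] // p2;
  rewrite /wcF !mkF0 // !mkF1 // !mkF2 //=.
Qed.


Lemma dimker_Pc : dim_ker (gq_H Pc) = 1%N.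
Proof.
have l := gq_lower Pc_valid.
have HPc : gq_H Pc = (emb1 Q1 + emb2 P2c)%R := HE Pc.
move: l; rewrite /dim_ker HPc.
pose w := rvf (fun x : FI => if wcF x then 1 else 0 : C).
have sub : (kermx (emb1 Q1 + emb2 P2c)%R <= w)%MS.
  apply/row_subP => i; set r := row i _.
  have rb : r *m (emb1 Q1 + emb2 P2c) = 0 by rewrite -row_mul mulmx_ker row0.
  pose g x := r 0 (enum_rank x).
  have H : forall y, \sum_x g x * (emb1 Q1 + emb2 P2c) (enum_rank x) (enum_rank y) = 0.
    move=> y; have E : (r *m (emb1 Q1 + emb2 P2c)) 0 (enum_rank y) = 0 by rewrite rb mxE.
    rewrite mxE in E; apply: etrans _ E.
    exact: (sum_rank (fun i => r 0 i * (emb1 Q1 + emb2 P2c) i (enum_rank y))).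
  have -> : r = g (mkF 2 0 0) *: w.
    apply/rowP => j.
    have -> : r 0 j = g (enum_val j) by rewrite /g enum_valK.
    rewrite !mxE (kerH H); by case: (wcF _); rewrite ?mulr1 ?mulr0.
  exact: scalemx_sub (submx_refl w).
have := mxrankS sub; have := rank_leq_row w; rewrite mxrank_ker.
match goal with |- context[(?x - \rank (emb1 Q1 + emb2 P2c)%R)%N] =>
  have cM : x = 18%N by exact: cardF end.
move: cM; move: (\rank (emb1 Q1 + emb2 P2c)%R) (\rank w) => a b cM; rewrite cM; lia.
Qed.
End Exist.

End Aux.
Import Aux.

Theorem mainTheorem16 (C : numClosedFieldType) :
  GQSAT_is C inst16 1 /\
  template_wf G16 /\ QMC_is G16 15 /\ QMF_is G16 C 14.
Proof.
split; [split | split; [exact: wf16 | split; [exact: qmc16 | split]]].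
- exists (Pc C); split; [exact: Pc_valid | exact: dimker_Pc].
- by move=> P hP; apply: gq_lower.
- by exists (Tn0 C); apply: rank_beta0.
- by move=> Tn; apply: rank_beta_le.
Qed.
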